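(* Let $r=\frac{e^2-1}{e^2+1}$ and let $\mathbb{D}_K(1)=\{x\in\mathbb{R}^2:|x|<r\}$ be the Klein unit disc. For $x\in\mathbb{D}_K(1)$ and $\xi\in T_x\mathbb{D}_K(1)\cong\mathbb{R}^2$, $\xi\neq0$, define $$\mathcal{F}(x,\xi)=\coth\big(d_K(x,\mathfrak{a})\big)\,\alpha_K(x,\xi),$$ where $\mathfrak{a}=\mathfrak{a}(x,\xi)$ is the unique point $x+s\xi$ with $s>0$ and $|x+s\xi|=r$, and set $\mathcal{F}(x,0)=0$. Then $\mathcal{F}=\alpha_F+\beta_F$ with $$\alpha_F(x,\xi)=\frac{\sqrt{(r^2-|x|^2)|\xi|^2+\langle x,\xi\rangle^2}}{r^2-|x|^2},\qquad \beta_F(x,\xi)=\frac{(1-r^2)\langle x,\xi\rangle}{(r^2-|x|^2)(1-|x|^2)}.$$ Moreover $\alpha_F$ is a Riemannian metric on $\mathbb{D}_K(1)$, $\beta_F=df$ is exact (hence closed) with $f(x)=\tfrac12\log\frac{1-|x|^2}{r^2-|x|^2}$, and $$\|\beta_F\|_{\alpha_F}^2=\frac{|x|^2(1-r^2)^2}{r^2(1-|x|^2)^2}<1\quad\text{on }\mathbb{D}_K(1),$$ so that $\mathcal{F}$ is a Randers metric on $\mathbb{D}_K(1)$ with closed $1$-form.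
   Context: $|\cdot|$ and $\langle\cdot,\cdot\rangle$ are the Euclidean norm and inner product on $\mathbb{R}^2$. The Klein distance on $\mathbb{D}_E(1)=\{|x|<1\}$ is $d_K(x,y)=\tfrac12\log\frac{|x-a||y-b|}{|y-a||x-b|}$ for $x\ne y$, where $a$ (resp. $b$) is the intersection of the Euclidean ray from $x$ through $y$ (resp. from $y$ through $x$) with the unit circle; $d_K(x,x)=0$. The Klein (Riemannian) metric on $\mathbb{D}_E(1)$ is $\alpha_K(x,\xi)=\frac{\sqrt{(1-|x|^2)|\xi|^2+\langle x,\xi\rangle^2}}{1-|x|^2}$. A Randers metric is $F=\alpha+\beta$ with $\alpha=\sqrt{a_{ij}(x)\xi^i\xi^j}$ Riemannian and $\beta=b_i(x)\xi^i$ a $1$-form with $\|\beta\|_\alpha^2=a^{ij}b_ib_j<1$. *)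

(* Defs.v *)
From Stdlib Require Import Reals.
From Coquelicot Require Import Coquelicot.
Open Scope R_scope.

Definition R2 : Type := (R * R)%type.

Definition dot (u v : R2) : R := fst u * fst v + snd u * snd v.
Definition nrm2 (u : R2) : R := dot u u.
Definition nrm (u : R2) : R := sqrt (nrm2 u).
Definition vadd (u v : R2) : R2 := (fst u + fst v, snd u + snd v).
Definition vsub (u v : R2) : R2 := (fst u - fst v, snd u - snd v).
Definition vscal (s : R) (u : R2) : R2 := (s * fst u, s * snd u).

(** The point p + t v (t > 0) on the circle of radius c, for |p| < c and
    v <> 0: t is the unique positive root of |p + t v|^2 = c^2. *)
Definition ray_exit (c : R) (p v : R2) : R2 :=
  let t := (- dot p v + sqrt (dot p v ^ 2 + nrm2 v * (c ^ 2 - nrm2 p))) / nrm2 v in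
  vadd p (vscal t v).

Definition dK (x y : R2) : R :=
  match Req_EM_T (fst x) (fst y), Req_EM_T (snd x) (snd y) with
  | left _, left _ => 0
  | _, _ =>
    let a := ray_exit 1 x (vsub y x) in
    let b := ray_exit 1 y (vsub x y) in
    / 2 * ln ((nrm (vsub x a) * nrm (vsub y b)) / (nrm (vsub y a) * nrm (vsub x b)))
  end.

Definition alphaK (x xi : R2) : R :=
  sqrt ((1 - nrm2 x) * nrm2 xi + dot x xi ^ 2) / (1 - nrm2 x).

Definition coth (z : R) : R := cosh z / sinh z.

Definition rK : R := (exp 2 - 1) / (exp 2 + 1).
Definition DK1 (x : R2) : Prop := nrm x < rK.

Definition frak_a (x xi : R2) : R2 := ray_exit rK x xi.

Definition FF (x xi : R2) : R :=
  match Req_EM_T (fst xi) 0, Req_EM_T (snd xi) 0 with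
  | left _, left _ => 0
  | _, _ => coth (dK x (frak_a x xi)) * alphaK x xi
  end.

Definition alphaF (x xi : R2) : R :=
  sqrt ((rK ^ 2 - nrm2 x) * nrm2 xi + dot x xi ^ 2) / (rK ^ 2 - nrm2 x).

Definition betaF (x xi : R2) : R :=
  (1 - rK ^ 2) * dot x xi / ((rK ^ 2 - nrm2 x) * (1 - nrm2 x)).

Definition fF (x : R2) : R := / 2 * ln ((1 - nrm2 x) / (rK ^ 2 - nrm2 x)).

Fixpoint Ck (n : nat) (U : R2 -> Prop) (f : R2 -> R) : Prop :=
  match n with
  | O => forall x, U x -> continuous f x
  | S m => exists d1 d2 : R2 -> R,
      (forall x, U x ->
         is_derive (fun t => f (t, snd x)) (fst x) (d1 x) /\
         is_derive (fun t => f (fst x, t)) (snd x) (d2 x)) /\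
      Ck m U d1 /\ Ck m U d2
  end.

Definition smooth (U : R2 -> Prop) (f : R2 -> R) : Prop := forall n, Ck n U f.

Definition qform (g11 g12 g22 : R) (xi : R2) : R :=
  g11 * fst xi ^ 2 + 2 * g12 * fst xi * snd xi + g22 * snd xi ^ 2.

Definition riemann_coeffs (U : R2 -> Prop) (alpha : R2 -> R2 -> R)
  (g11 g12 g22 : R2 -> R) : Prop :=
  (forall x xi, U x -> alpha x xi = sqrt (qform (g11 x) (g12 x) (g22 x) xi)) /\
  (forall x xi, U x -> xi <> (0, 0) -> 0 < qform (g11 x) (g12 x) (g22 x) xi) /\
  smooth U g11 /\ smooth U g12 /\ smooth U g22.

Definition is_Riemannian_metric (U : R2 -> Prop) (alpha : R2 -> R2 -> R) : Prop :=
  exists g11 g12 g22, riemann_coeffs U alpha g11 g12 g22.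

Definition oneform_coeffs (U : R2 -> Prop) (beta : R2 -> R2 -> R)
  (b1 b2 : R2 -> R) : Prop :=
  (forall x xi, U x -> beta x xi = b1 x * fst xi + b2 x * snd xi) /\
  smooth U b1 /\ smooth U b2.

Definition is_differential_of (U : R2 -> Prop) (beta : R2 -> R2 -> R)
  (f : R2 -> R) : Prop :=
  exists b1 b2, oneform_coeffs U beta b1 b2 /\
    forall x, U x ->
      is_derive (fun t => f (t, snd x)) (fst x) (b1 x) /\
      is_derive (fun t => f (fst x, t)) (snd x) (b2 x).

Definition is_closed_form (U : R2 -> Prop) (beta : R2 -> R2 -> R) : Prop :=
  exists b1 b2, oneform_coeffs U beta b1 b2 /\
    forall x, U x -> exists c,
      is_derive (fun t => b2 (t, snd x)) (fst x) c /\
      is_derive (fun t => b1 (fst x, t)) (snd x) c.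

(** ||beta||_alpha^2 = a^{ij} b_i b_j, (a^{ij}) the inverse of (a_ij). *)
Definition dual_norm_sq (g11 g12 g22 b1 b2 : R) : R :=
  (g22 * b1 ^ 2 - 2 * g12 * b1 * b2 + g11 * b2 ^ 2) / (g11 * g22 - g12 ^ 2).

Definition is_Randers (U : R2 -> Prop) (F : R2 -> R2 -> R) : Prop :=
  exists (alpha beta : R2 -> R2 -> R) g11 g12 g22 b1 b2,
    riemann_coeffs U alpha g11 g12 g22 /\
    oneform_coeffs U beta b1 b2 /\
    (forall x xi, U x -> F x xi = alpha x xi + beta x xi) /\
    (forall x, U x -> dual_norm_sq (g11 x) (g12 x) (g22 x) (b1 x) (b2 x) < 1).

(* Main.v *)
Require Import Defs.
From Stdlib Require Import Reals Lra Psatz.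
From Coquelicot Require Import Coquelicot.
Open Scope R_scope.

Lemma rK_pos : 0 < rK /\ rK < 1.
Proof.
  unfold rK. assert (H := exp_pos 2). assert (H1 : 1 < exp 2).
  { rewrite <- exp_0. apply exp_increasing. lra. }
  split.
  - apply Rdiv_lt_0_compat; lra.
  - apply (Rmult_lt_reg_r (exp 2 + 1)); [lra|]. field_simplify; lra.
Qed.

Lemma coth_half_ln (Q : R) : 1 < Q -> coth (/ 2 * ln Q) = (Q + 1) / (Q - 1).
Proof.
  intros HQ. unfold coth, cosh, sinh.
  set (w := exp (/2 * ln Q)).
  assert (Hw : 0 < w) by apply exp_pos.
  assert (Hw2 : w * w = Q).
  { unfold w. rewrite <- exp_plus. replace (/2 * ln Q + /2 * ln Q) with (ln Q) by field.
    apply exp_ln; lra. }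
  rewrite exp_Ropp. fold w.
  rewrite <- Hw2. field. split; [lra|]. intro H. 
  assert (w * w - 1 = 0) by (replace (w*w - 1) with ((w - /w) * w) by (field; lra); rewrite H; ring). lra.
Qed.

Lemma DK1_m x : DK1 x -> 0 <= nrm2 x < rK ^ 2.
Proof.
  unfold DK1, nrm. intros H. destruct x as [a b]. unfold nrm2, dot in *; simpl in *.
  assert (0 <= a * a + b * b) by nra. split; auto.
  rewrite <- (sqrt_sqrt (a*a+b*b)) by auto.
  assert (0 <= sqrt (a*a+b*b)) by apply sqrt_pos. nra.
Qed.
Lemma core (p N m r2 Sr S1 SN : R) :
  0 < N -> 0 < SN -> m < r2 -> r2 < 1 ->
  Sr ^ 2 = p ^ 2 + N * (r2 - m) -> S1 ^ 2 = p ^ 2 + N * (1 - m) -> 0 <= Sr -> 0 <= S1 ->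
  let tp := (- p + S1) / N in let tm := (- p - S1) / N in let s := (- p + Sr) / N in
  let Q := (tp * SN * ((s - tm) * SN)) / (((tp - s) * SN) * ((- tm) * SN)) in
  (Q + 1) / (Q - 1) * (S1 / (1 - m)) = Sr / (r2 - m) + (1 - r2) * p / ((r2 - m) * (1 - m)).
Proof.
  intros HN HSN Hm Hr HSr HS1 Sr0 S10 tp tm s Q.
  assert (Hsr : p < Sr) by nra.
  assert (Hs1 : Sr < S1) by nra.
  assert (Hs1' : - p < Sr) by nra.
  assert (Em : m = r2 - (Sr^2 - p^2)/N) by (rewrite HSr; field; lra).
  assert (Er : r2 = 1 - (S1^2 - Sr^2)/N) by (rewrite HSr, HS1; field; lra).
  assert (E1 : Sr^2 - p^2 > 0) by nra.
  assert (E2 : S1^2 - Sr^2 > 0) by nra.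
  unfold Q, tp, tm, s. subst m. subst r2.
  field. repeat split; try lra; nra.
Qed.

Lemma nrm_line2 (x xi : R2) (t1 t2 : R) :
  nrm (vsub (vadd x (vscal t1 xi)) (vadd x (vscal t2 xi))) = Rabs (t1 - t2) * sqrt (nrm2 xi).
Proof.
  unfold nrm. rewrite <- sqrt_Rsqr_abs, <- sqrt_mult by (try apply Rle_0_sqr; destruct xi; unfold nrm2, dot; simpl; nra).
  f_equal. destruct x, xi; unfold nrm2, dot, vsub, vadd, vscal, Rsqr; simpl. ring.
Qed.

Lemma nrm_line1 (x xi : R2) (t : R) :
  nrm (vsub x (vadd x (vscal t xi))) = Rabs t * sqrt (nrm2 xi).
Proof.
  unfold nrm. rewrite <- sqrt_Rsqr_abs, <- sqrt_mult by (try apply Rle_0_sqr; destruct xi; unfold nrm2, dot; simpl; nra).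
  f_equal. destruct x, xi; unfold nrm2, dot, vsub, vadd, vscal, Rsqr; simpl. ring.
Qed.

Lemma sqrt_scale s e : 0 <= s -> 0 <= e -> sqrt (s ^ 2 * e) = s * sqrt e.
Proof. intros. rewrite sqrt_mult. rewrite sqrt_pow2; auto. apply pow_le; auto. auto. Qed.

Lemma FF_main x xi : 0 <= nrm2 x < rK ^ 2 -> 0 < nrm2 xi ->
  coth (dK x (frak_a x xi)) * alphaK x xi = alphaF x xi + betaF x xi.
Proof.
  intros [Hm0 Hm] HN. destruct rK_pos as [Hr0 Hr1].
  assert (HrK : rK ^ 2 < 1) by nra.
  set (p := dot x xi) in *. set (N := nrm2 xi) in *. set (m := nrm2 x) in *.
  assert (Ep : 0 <= p ^ 2) by (apply pow2_ge_0).
  assert (ENr : 0 < N * (rK ^ 2 - m)) by (apply Rmult_lt_0_compat; lra).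
  assert (EN1 : 0 < N * (1 - m)) by (apply Rmult_lt_0_compat; lra).
  assert (Er0 : 0 <= p ^ 2 + N * (rK ^ 2 - m)) by lra.
  assert (E10 : 0 <= p ^ 2 + N * (1 - m)) by lra.
  set (Sr := sqrt (p ^ 2 + N * (rK ^ 2 - m))).
  set (S1 := sqrt (p ^ 2 + N * (1 - m))). set (SN := sqrt N).
  assert (HSr : Sr ^ 2 = p ^ 2 + N * (rK ^ 2 - m)) by (apply pow2_sqrt; auto).
  assert (HS1 : S1 ^ 2 = p ^ 2 + N * (1 - m)) by (apply pow2_sqrt; auto).
  assert (Sr0 : 0 <= Sr) by apply sqrt_pos.
  assert (S10 : 0 <= S1) by apply sqrt_pos.
  assert (SN0 : 0 < SN) by (apply sqrt_lt_R0; auto).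
  assert (Hsr : p < Sr) by nra.
  assert (Hs1 : Sr < S1) by nra.
  assert (Hs1' : - p < Sr) by nra.
  set (s := (- p + Sr) / N). set (tp := (- p + S1) / N). set (tm := (- p - S1) / N).
  assert (s0 : 0 < s) by (unfold s; apply Rdiv_lt_0_compat; lra).
  assert (Ea : frak_a x xi = vadd x (vscal s xi)).
  { unfold frak_a, ray_exit. fold p N m. replace (dot x xi ^ 2 + N * (rK ^ 2 - m)) with (p^2 + N * (rK ^ 2 - m)) by reflexivity. fold Sr. reflexivity. }
  assert (EA : ray_exit 1 x (vsub (vadd x (vscal s xi)) x) = vadd x (vscal tp xi)).
  { unfold ray_exit.
    assert (Hd : dot x (vsub (vadd x (vscal s xi)) x) = s * p)
      by (unfold p; destruct x, xi; unfold dot, vsub, vadd, vscal; cbn [fst snd]; ring).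
    assert (Hn : nrm2 (vsub (vadd x (vscal s xi)) x) = s ^ 2 * N)
      by (unfold N; destruct x, xi; unfold nrm2, dot, vsub, vadd, vscal; cbn [fst snd]; ring).
    rewrite Hd, Hn. fold m.
    replace ((s * p) ^ 2 + s ^ 2 * N * (1 ^ 2 - m)) with (s ^ 2 * (p ^ 2 + N * (1 - m))) by ring.
    rewrite sqrt_scale by lra. fold S1.
    unfold tp. clearbody Sr S1 SN. unfold N in *. destruct x, xi; unfold vsub, vadd, vscal in *; cbn [fst snd] in *.
    f_equal; field; split; lra. }
  assert (EB : ray_exit 1 (vadd x (vscal s xi)) (vsub x (vadd x (vscal s xi))) = vadd x (vscal tm xi)).
  { unfold ray_exit.
    assert (Hd : dot (vadd x (vscal s xi)) (vsub x (vadd x (vscal s xi))) = - s * (p + s * N))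
      by (unfold p, N; destruct x, xi; unfold nrm2, dot, vsub, vadd, vscal; cbn [fst snd]; ring).
    assert (Hn : nrm2 (vsub x (vadd x (vscal s xi))) = s ^ 2 * N)
      by (unfold N; destruct x, xi; unfold nrm2, dot, vsub, vadd, vscal; cbn [fst snd]; ring).
    assert (Hn2 : nrm2 (vadd x (vscal s xi)) = m + 2 * s * p + s ^ 2 * N)
      by (unfold m, p, N; destruct x, xi; unfold nrm2, dot, vsub, vadd, vscal; cbn [fst snd]; ring).
    rewrite Hd, Hn, Hn2.
    replace ((- s * (p + s * N)) ^ 2 + s ^ 2 * N * (1 ^ 2 - (m + 2 * s * p + s ^ 2 * N)))
      with (s ^ 2 * (p ^ 2 + N * (1 - m))) by ring.
    rewrite sqrt_scale by lra. fold S1.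
    unfold tm. clearbody s Sr S1 SN. unfold N in *. destruct x, xi; unfold vsub, vadd, vscal in *; cbn [fst snd] in *.
    f_equal; field; split; lra. }
  assert (Hne : ~ (fst x = fst (frak_a x xi) /\ snd x = snd (frak_a x xi))).
  { rewrite Ea. intros [H1 H2]. unfold vadd, vscal in H1, H2; cbn [fst snd] in H1, H2.
    assert (K1 : s * fst xi = 0) by lra. assert (K2 : s * snd xi = 0) by lra.
    apply Rmult_integral in K1. apply Rmult_integral in K2.
    destruct K1 as [K1|K1]; [lra|]. destruct K2 as [K2|K2]; [lra|].
    unfold N, nrm2, dot in HN. rewrite K1, K2 in HN. lra. }
  assert (Htp : 0 < tp) by (unfold tp; apply Rdiv_lt_0_compat; lra).
    assert (Htm : tm < 0).
    { assert (0 < (p + S1) / N) by (apply Rdiv_lt_0_compat; lra).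
      replace tm with (- ((p + S1) / N)) by (unfold tm; field; lra). lra. }
    assert (Hstp : s - tp < 0).
    { unfold s, tp. replace ((- p + Sr) / N - (- p + S1) / N) with (- ((S1 - Sr) / N)) by (field; lra).
      assert (0 < (S1 - Sr) / N) by (apply Rdiv_lt_0_compat; lra). lra. }
  assert (HdK : dK x (frak_a x xi) = / 2 * ln ((tp * SN * ((s - tm) * SN)) / (((tp - s) * SN) * ((- tm) * SN)))).
  {    unfold dK. destruct (Req_EM_T (fst x) (fst (frak_a x xi))); destruct (Req_EM_T (snd x) (snd (frak_a x xi)));
      try (exfalso; tauto);
      rewrite Ea, EA, EB, nrm_line1, nrm_line2, nrm_line2, nrm_line1; fold N SN;
      rewrite (Rabs_pos_eq tp), (Rabs_pos_eq (s - tm)), (Rabs_left (s - tp)), (Rabs_left tm) by lra;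
      replace (- (s - tp)) with (tp - s) by ring; reflexivity. }
  rewrite HdK, coth_half_ln.
  2:{ set (n := tp * SN * ((s - tm) * SN)). set (d := (tp - s) * SN * (- tm * SN)).
      assert (Hd : 0 < d) by (unfold d; apply Rmult_lt_0_compat; apply Rmult_lt_0_compat; lra).
      assert (Hnd : n - d = s * (tp - tm) * SN * SN) by (unfold n, d; ring).
      assert (0 < (n - d) / d) by (apply Rdiv_lt_0_compat; [rewrite Hnd; apply Rmult_lt_0_compat; [apply Rmult_lt_0_compat; [apply Rmult_lt_0_compat|]|]; lra | lra]).
      replace (n / d) with (1 + (n - d) / d) by (field; lra). lra. }
  unfold alphaK, alphaF, betaF. fold m N p.
  replace ((1 - m) * N + p ^ 2) with (p ^ 2 + N * (1 - m)) by ring.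
  replace ((rK ^ 2 - m) * N + p ^ 2) with (p ^ 2 + N * (rK ^ 2 - m)) by ring.
  fold S1 Sr.
  pose proof (core p N m (rK ^ 2) Sr S1 SN HN SN0 Hm HrK HSr HS1 Sr0 S10) as C.
  cbv zeta in C. unfold s, tp, tm. exact C.
Qed.


Lemma FF_eq x xi : DK1 x -> FF x xi = alphaF x xi + betaF x xi.
Proof.
  intros Hx. destruct (DK1_m x Hx) as [Hm0 Hm]. destruct rK_pos as [Hr0 Hr1].
  destruct x as [x1 x2], xi as [u v].
  unfold FF; cbn [fst snd].
  destruct (Req_EM_T u 0) as [Hu|Hu]; destruct (Req_EM_T v 0) as [Hv|Hv].
  { subst. unfold alphaF, betaF, nrm2, dot in *; cbn [fst snd] in *.
    match goal with |- context[sqrt ?e] => replace e with 0 by ring end.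
    rewrite sqrt_0. field. nra. }
  all: apply FF_main; [unfold nrm2, dot in *; cbn [fst snd] in *; lra |
       unfold nrm2, dot; cbn [fst snd]; nra].
Qed.

Inductive ex : Type :=
| EC (c : R) | EX | EY | EAdd (a b : ex) | EMul (a b : ex) | EID | EIE.

Definition Dq (x : R2) := rK ^ 2 - (fst x * fst x + snd x * snd x).
Definition Eq1 (x : R2) := 1 - (fst x * fst x + snd x * snd x).

Fixpoint ev (e : ex) (x : R2) : R :=
  match e with
  | EC c => c | EX => fst x | EY => snd x
  | EAdd a b => ev a x + ev b x
  | EMul a b => ev a x * ev b x
  | EID => / Dq x
  | EIE => / Eq1 x
  end.

Fixpoint d1 (e : ex) : ex :=
  match e with
  | EC _ => EC 0 | EX => EC 1 | EY => EC 0
  | EAdd a b => EAdd (d1 a) (d1 b)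
  | EMul a b => EAdd (EMul (d1 a) b) (EMul a (d1 b))
  | EID => EMul (EMul (EC 2) EX) (EMul EID EID)
  | EIE => EMul (EMul (EC 2) EX) (EMul EIE EIE)
  end.

Fixpoint d2 (e : ex) : ex :=
  match e with
  | EC _ => EC 0 | EX => EC 0 | EY => EC 1
  | EAdd a b => EAdd (d2 a) (d2 b)
  | EMul a b => EAdd (EMul (d2 a) b) (EMul a (d2 b))
  | EID => EMul (EMul (EC 2) EY) (EMul EID EID)
  | EIE => EMul (EMul (EC 2) EY) (EMul EIE EIE)
  end.

Definition good (x : R2) := Dq x <> 0 /\ Eq1 x <> 0.

Lemma ev_d1 e x : good x -> is_derive (fun t => ev e (t, snd x)) (fst x) (ev (d1 e) x).
Proof.
  intros [HD HE]. destruct x as [a b]. unfold Dq, Eq1 in *; cbn [fst snd] in *.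
  induction e; cbn [ev d1 fst snd].
  - auto_derive; try tauto; try ring.
  - auto_derive; try tauto; try ring.
  - auto_derive; try tauto; try ring.
  - exact (is_derive_plus _ _ _ _ _ IHe1 IHe2).
  - exact (is_derive_mult _ _ _ _ _ IHe1 IHe2 Rmult_comm).
  - unfold Dq; cbn [fst snd]. auto_derive; auto. field. auto.
  - unfold Eq1; cbn [fst snd]. auto_derive; auto. field. auto.
Qed.

Lemma ev_d2 e x : good x -> is_derive (fun t => ev e (fst x, t)) (snd x) (ev (d2 e) x).
Proof.
  intros [HD HE]. destruct x as [a b]. unfold Dq, Eq1 in *; cbn [fst snd] in *.
  induction e; cbn [ev d2 fst snd].
  - auto_derive; try tauto; try ring.
  - auto_derive; try tauto; try ring.
  - auto_derive; try tauto; try ring.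
  - exact (is_derive_plus _ _ _ _ _ IHe1 IHe2).
  - exact (is_derive_mult _ _ _ _ _ IHe1 IHe2 Rmult_comm).
  - unfold Dq; cbn [fst snd]. auto_derive; auto. field. auto.
  - unfold Eq1; cbn [fst snd]. auto_derive; auto. field. auto.
Qed.

Lemma cont_inv (f : R2 -> R) x : continuous f x -> f x <> 0 -> continuous (fun y => / f y) x.
Proof.
  intros Hf Hx.
  assert (H2 : @continuous R_UniformSpace R_UniformSpace Rinv (f x)).
  { apply (@ex_derive_continuous R_AbsRing R_NormedModule Rinv). auto_derive. auto. }
  exact (continuous_comp f Rinv x Hf H2).
Qed.

Lemma ev_cont e x : good x -> continuous (ev e) x.
Proof.
  intros [HD HE]. destruct x as [a b].
  assert (Cq : continuous (fun y : R2 => fst y * fst y + snd y * snd y) (a, b)).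
  { apply (continuous_plus (fun y : R2 => fst y * fst y) (fun y : R2 => snd y * snd y));
    apply (continuous_mult (fun y : R2 => fst y) (fun y : R2 => fst y)) || apply (continuous_mult (fun y : R2 => snd y) (fun y : R2 => snd y));
    (apply continuous_fst || apply continuous_snd). }
  induction e; cbn [ev].
  - apply continuous_const.
  - apply continuous_fst.
  - apply continuous_snd.
  - apply (continuous_plus (ev e1) (ev e2)); auto.
  - apply (continuous_mult (ev e1) (ev e2)); auto.
  - apply (cont_inv Dq); auto. unfold Dq.
    apply (continuous_plus (fun _ => rK ^ 2) (fun y : R2 => - (fst y * fst y + snd y * snd y))).
    apply continuous_const. apply (continuous_opp (fun y : R2 => (fst y * fst y + snd y * snd y))). auto.
  - apply (cont_inv Eq1); auto. unfold Eq1.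
    apply (continuous_plus (fun _ => 1) (fun y : R2 => - (fst y * fst y + snd y * snd y))).
    apply continuous_const. apply (continuous_opp (fun y : R2 => (fst y * fst y + snd y * snd y))). auto.
Qed.

Lemma ev_smooth (U : R2 -> Prop) e : (forall x, U x -> good x) -> smooth U (ev e).
Proof.
  intros HU n. revert e. induction n; intros e; cbn [Ck].
  - intros x Hx. apply ev_cont; auto.
  - exists (ev (d1 e)), (ev (d2 e)). split; [|split; auto].
    intros x Hx. split; [apply ev_d1 | apply ev_d2]; auto.
Qed.

Definition Dex := EAdd (EC (rK ^ 2)) (EMul (EC (-1)) (EAdd (EMul EX EX) (EMul EY EY))).
Definition g11e := EMul (EAdd Dex (EMul EX EX)) (EMul EID EID).
Definition g12e := EMul (EMul EX EY) (EMul EID EID).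
Definition g22e := EMul (EAdd Dex (EMul EY EY)) (EMul EID EID).
Definition b1e := EMul (EMul (EC (1 - rK ^ 2)) EX) (EMul EID EIE).
Definition b2e := EMul (EMul (EC (1 - rK ^ 2)) EY) (EMul EID EIE).

Lemma DK1_pos a b : DK1 (a, b) -> 0 < rK ^ 2 - (a * a + b * b) /\ 0 < 1 - (a * a + b * b) /\ 0 <= a * a + b * b.
Proof.
  intros H. destruct (DK1_m _ H) as [H1 H2]. destruct rK_pos.
  unfold nrm2, dot in *; cbn [fst snd] in *. repeat split; nra.
Qed.

Lemma DK1_good x : DK1 x -> good x.
Proof.
  destruct x as [a b]. intros H. destruct (DK1_pos a b H) as [H1 [H2 _]].
  unfold good, Dq, Eq1; cbn [fst snd]. split; lra.
Qed.

Lemma riem : riemann_coeffs DK1 alphaF (ev g11e) (ev g12e) (ev g22e).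
Proof.
  split; [|split; [|repeat split; apply ev_smooth; exact DK1_good]].
  - intros [a b] [u v] H. destruct (DK1_pos a b H) as [HD [HE Hm]].
    unfold alphaF, qform, g11e, g12e, g22e, Dex, nrm2, dot; cbn [ev fst snd]. unfold Dq; cbn [fst snd].
    match goal with |- _ = sqrt ?e => replace e with (((rK ^ 2 - (a * a + b * b)) * (u * u + v * v) + (a * u + b * v) ^ 2) * (/ (rK ^ 2 - (a * a + b * b))) ^ 2) by (field; lra) end.
    rewrite sqrt_mult, sqrt_pow2. field; lra.
    + left; apply Rinv_0_lt_compat; lra.
    + apply Rplus_le_le_0_compat; [apply Rmult_le_pos; nra | apply pow2_ge_0].
    + apply pow2_ge_0.
  - intros [a b] [u v] H Hne. destruct (DK1_pos a b H) as [HD [HE Hm]].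
    unfold qform, g11e, g12e, g22e, Dex; cbn [ev fst snd]. unfold Dq; cbn [fst snd].
    assert (HN : 0 < u * u + v * v).
    { destruct (Req_dec u 0); destruct (Req_dec v 0); [subst; exfalso; auto | nra | nra | nra]. }
    match goal with |- 0 < ?e => replace e with (((rK ^ 2 - (a * a + b * b)) * (u * u + v * v) + (a * u + b * v) ^ 2) * (/ (rK ^ 2 - (a * a + b * b))) ^ 2) by (field; lra) end.
    apply Rmult_lt_0_compat.
    { assert (0 < (rK ^ 2 - (a * a + b * b)) * (u * u + v * v)) by (apply Rmult_lt_0_compat; lra).
      assert (0 <= (a * u + b * v) ^ 2) by apply pow2_ge_0. lra. }
    apply pow_lt, Rinv_0_lt_compat; lra.
Qed.

Lemma oneform : oneform_coeffs DK1 betaF (ev b1e) (ev b2e).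
Proof.
  split; [|split; apply ev_smooth; exact DK1_good].
  intros [a b] [u v] H. destruct (DK1_pos a b H) as [HD [HE Hm]].
  unfold betaF, b1e, b2e, nrm2, dot; cbn [ev fst snd]. unfold Dq, Eq1; cbn [fst snd].
  field; lra.
Qed.

Lemma diff : is_differential_of DK1 betaF fF.
Proof.
  exists (ev b1e), (ev b2e). split; [exact oneform|].
  intros [a b] H. destruct (DK1_pos a b H) as [HD [HE Hm]].
  unfold fF, b1e, b2e, nrm2, dot; cbn [ev fst snd]. unfold Dq, Eq1; cbn [fst snd].
  assert (E : rK * (rK * 1) = rK ^ 2) by ring.
  assert (P : 0 < (1 + - (a * a + b * b)) * / (rK ^ 2 + - (a * a + b * b)))
    by (apply Rmult_lt_0_compat; [lra| apply Rinv_0_lt_compat; lra]).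
  split; auto_derive; rewrite ?E.
  all: try (repeat split; lra).
  all: field; repeat split; lra.
Qed.

Lemma closed : is_closed_form DK1 betaF.
Proof.
  exists (ev b1e), (ev b2e). split; [exact oneform|].
  intros x H. exists (ev (d1 b2e) x). split.
  - apply ev_d1, DK1_good; auto.
  - replace (ev (d1 b2e) x) with (ev (d2 b1e) x).
    + apply ev_d2, DK1_good; auto.
    + unfold b1e, b2e; cbn [ev d1 d2]. ring.
Qed.

Lemma dual x : DK1 x ->
  dual_norm_sq (ev g11e x) (ev g12e x) (ev g22e x) (ev b1e x) (ev b2e x)
    = nrm2 x * (1 - rK ^ 2) ^ 2 / (rK ^ 2 * (1 - nrm2 x) ^ 2) /\
  nrm2 x * (1 - rK ^ 2) ^ 2 / (rK ^ 2 * (1 - nrm2 x) ^ 2) < 1.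
Proof.
  destruct x as [a b]. intros H. destruct (DK1_pos a b H) as [HD [HE Hm]].
  destruct rK_pos as [Hr0 Hr1].
  unfold dual_norm_sq, g11e, g12e, g22e, b1e, b2e, Dex, nrm2, dot; cbn [ev fst snd]. unfold Dq, Eq1; cbn [fst snd].
  split.
  - set (D := rK ^ 2 - (a * a + b * b)).
    assert (Hdet : (rK ^ 2 + - 1 * (a * a + b * b) + a * a) * (/ D * / D) *
       ((rK ^ 2 + - 1 * (a * a + b * b) + b * b) * (/ D * / D)) - (a * b * (/ D * / D)) ^ 2 = rK ^ 2 / D ^ 3).
    { unfold D. field. lra. }
    rewrite Hdet. unfold D. field. repeat split; lra.
  - set (m := a * a + b * b) in *. set (q := sqrt m).
    assert (Hq : q * q = m) by (apply sqrt_sqrt; lra).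
    assert (q0 : 0 <= q) by apply sqrt_pos.
    assert (qr : q < rK) by nra.
    assert (K1 : q * (1 - rK ^ 2) < rK * (1 - m)) by nra.
    assert (K0 : 0 < 1 - rK ^ 2) by nra.
    assert (K2 : 0 <= q * (1 - rK ^ 2)) by (apply Rmult_le_pos; lra).
    apply (Rmult_lt_reg_r (rK ^ 2 * (1 - m) ^ 2)). apply Rmult_lt_0_compat; nra.
    unfold Rdiv. rewrite Rmult_assoc, Rinv_l, Rmult_1_r, Rmult_1_l by nra.
    set (A := q * (1 - rK ^ 2)) in *. set (B := rK * (1 - m)) in *.
    assert (AB : A * A < B * B) by nra.
    replace (m * (1 - rK ^ 2) ^ 2) with (A * A) by (unfold A; rewrite <- Hq; ring).
    replace (rK ^ 2 * (1 - m) ^ 2) with (B * B) by (unfold B; ring). exact AB.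
Qed.

Theorem theorem3p1 :
  (forall x xi, DK1 x -> FF x xi = alphaF x xi + betaF x xi) /\
  is_Riemannian_metric DK1 alphaF /\
  is_differential_of DK1 betaF fF /\
  is_closed_form DK1 betaF /\
  (exists g11 g12 g22 b1 b2,
     riemann_coeffs DK1 alphaF g11 g12 g22 /\
     oneform_coeffs DK1 betaF b1 b2 /\
     forall x, DK1 x ->
       dual_norm_sq (g11 x) (g12 x) (g22 x) (b1 x) (b2 x)
         = nrm2 x * (1 - rK ^ 2) ^ 2 / (rK ^ 2 * (1 - nrm2 x) ^ 2) /\
       nrm2 x * (1 - rK ^ 2) ^ 2 / (rK ^ 2 * (1 - nrm2 x) ^ 2) < 1) /\
  is_Randers DK1 FF.
Proof.
  split; [exact FF_eq|].
  split; [exists (ev g11e), (ev g12e), (ev g22e); exact riem|].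
  split; [exact diff|].
  split; [exact closed|].
  split.
  - exists (ev g11e), (ev g12e), (ev g22e), (ev b1e), (ev b2e).
    split; [exact riem|]. split; [exact oneform|]. exact dual.
  - exists alphaF, betaF, (ev g11e), (ev g12e), (ev g22e), (ev b1e), (ev b2e).
    split; [exact riem|]. split; [exact oneform|]. split; [exact FF_eq|].
    intros x Hx. destruct (dual x Hx) as [E L]. rewrite E. exact L.
Qed.
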